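(* $\mathsf{HA}\vdash\mathsf{HA}^\exists$, i.e. every axiom of $\mathsf{HA}^\exists$ is provable in $\mathsf{HA}$. Consequently every formula provable in $\mathsf{HA}^\exists$ is provable in $\mathsf{HA}$.
   Context: $\mathsf{HA}$ is Heyting arithmetic: intuitionistic first-order arithmetic over $0,\mathsf{S},+,\cdot,=$ with the equality axioms, the successor axioms, the defining axioms for $+$ and $\cdot$, and the induction scheme $P(0)\wedge\forall\alpha(P(\alpha)\to P(\alpha+1))\to\forall\alpha P(\alpha)$ for all formulas $P$. The $\exists$-translation $F\mapsto F^\exists$ is: $F^\exists=F$ for atomic $F$; it commutes with $\wedge,\vee,\to,\exists$; and $(\forall xF)^\exists=\neg\exists x\neg F^\exists$. $\mathsf{HA}^\exists$ is the intuitionistic theory whose axioms are the $\exists$-translations of the axioms of $\mathsf{HA}$ (in particular, the translated induction axiom is $P(0)\wedge\neg\exists\alpha\neg(P(\alpha)\to P(\alpha+1))\to\neg\exists\alpha\neg P(\alpha)$). *)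

(* Defs.v *)
From Stdlib Require Import List.
Import ListNotations.

Inductive term : Type :=
| tvar : nat -> term
| tzero : term
| tsucc : term -> term
| tplus : term -> term -> term
| tmult : term -> term -> term.

Inductive form : Type :=
| fEq : term -> term -> form
| fBot : form
| fAnd : form -> form -> form
| fOr : form -> form -> form
| fImp : form -> form -> form
| fAll : form -> form      (* binds de Bruijn index 0 *)
| fEx : form -> form.

Definition fNot (A : form) : form := fImp A fBot.

Fixpoint tsubst (s : nat -> term) (t : term) : term :=
  match t with
  | tvar n => s n
  | tzero => tzero
  | tsucc u => tsucc (tsubst s u)
  | tplus u v => tplus (tsubst s u) (tsubst s v)
  | tmult u v => tmult (tsubst s u) (tsubst s v)
  end.

Definition tlift (t : term) : term := tsubst (fun n => tvar (S n)) t.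

Definition up (s : nat -> term) : nat -> term :=
  fun n => match n with 0 => tvar 0 | S k => tlift (s k) end.

Fixpoint fsubst (s : nat -> term) (A : form) : form :=
  match A with
  | fEq u v => fEq (tsubst s u) (tsubst s v)
  | fBot => fBot
  | fAnd A B => fAnd (fsubst s A) (fsubst s B)
  | fOr A B => fOr (fsubst s A) (fsubst s B)
  | fImp A B => fImp (fsubst s A) (fsubst s B)
  | fAll A => fAll (fsubst (up s) A)
  | fEx A => fEx (fsubst (up s) A)
  end.

Definition flift (A : form) : form := fsubst (fun n => tvar (S n)) A.

(* substitution of t for variable 0 (other variables shift down) *)
Definition inst (t : term) : nat -> term :=
  fun n => match n with 0 => t | S k => tvar k end.

(* Axioms may contain free variables; since the axiom rule is available
   under every binder, they behave like their universal closures
   (as with a Hilbert system with the generalization rule). *)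
Inductive Der (T : form -> Prop) : list form -> form -> Prop :=
| D_ax : forall G A, T A -> Der T G A
| D_hyp : forall G A, In A G -> Der T G A
| D_botE : forall G A, Der T G fBot -> Der T G A
| D_andI : forall G A B, Der T G A -> Der T G B -> Der T G (fAnd A B)
| D_andE1 : forall G A B, Der T G (fAnd A B) -> Der T G A
| D_andE2 : forall G A B, Der T G (fAnd A B) -> Der T G B
| D_orI1 : forall G A B, Der T G A -> Der T G (fOr A B)
| D_orI2 : forall G A B, Der T G B -> Der T G (fOr A B)
| D_orE : forall G A B C, Der T G (fOr A B) -> Der T (A :: G) C ->
    Der T (B :: G) C -> Der T G C
| D_impI : forall G A B, Der T (A :: G) B -> Der T G (fImp A B)
| D_impE : forall G A B, Der T G (fImp A B) -> Der T G A -> Der T G B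
| D_allI : forall G A, Der T (map flift G) A -> Der T G (fAll A)
| D_allE : forall G A t, Der T G (fAll A) -> Der T G (fsubst (inst t) A)
| D_exI : forall G A t, Der T G (fsubst (inst t) A) -> Der T G (fEx A)
| D_exE : forall G A B, Der T G (fEx A) ->
    Der T (A :: map flift G) (flift B) -> Der T G B.

Definition provable (T : form -> Prop) (A : form) : Prop := Der T [] A.

Definition v0 := tvar 0.
Definition v1 := tvar 1.
Definition v2 := tvar 2.
Definition v3 := tvar 3.

(* The induction axiom for P, where index 0 of P plays the role of alpha
   and indices k+1 are the parameters k:
   P(0) /\ forall a (P(a) -> P(a+1)) -> forall a P(a). *)
Definition induction_ax (P : form) : form :=
  fImp (fAnd (fsubst (inst tzero) P)
             (fAll (fImp P (fsubst (fun n => match n with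
                                              | 0 => tsucc (tvar 0)
                                              | S k => tvar (S k) end) P))))
       (fAll P).

Inductive HA_ax : form -> Prop :=
| ax_refl : HA_ax (fEq v0 v0)
| ax_sym : HA_ax (fImp (fEq v0 v1) (fEq v1 v0))
| ax_trans : HA_ax (fImp (fEq v0 v1) (fImp (fEq v1 v2) (fEq v0 v2)))
| ax_cong_succ : HA_ax (fImp (fEq v0 v1) (fEq (tsucc v0) (tsucc v1)))
| ax_cong_plus : HA_ax (fImp (fEq v0 v1) (fImp (fEq v2 v3)
                          (fEq (tplus v0 v2) (tplus v1 v3))))
| ax_cong_mult : HA_ax (fImp (fEq v0 v1) (fImp (fEq v2 v3)
                          (fEq (tmult v0 v2) (tmult v1 v3))))
| ax_succ_nz : HA_ax (fNot (fEq (tsucc v0) tzero))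
| ax_succ_inj : HA_ax (fImp (fEq (tsucc v0) (tsucc v1)) (fEq v0 v1))
| ax_plus0 : HA_ax (fEq (tplus v0 tzero) v0)
| ax_plusS : HA_ax (fEq (tplus v0 (tsucc v1)) (tsucc (tplus v0 v1)))
| ax_mult0 : HA_ax (fEq (tmult v0 tzero) tzero)
| ax_multS : HA_ax (fEq (tmult v0 (tsucc v1)) (tplus (tmult v0 v1) v0))
| ax_ind : forall P, HA_ax (induction_ax P).

Fixpoint extr (A : form) : form :=
  match A with
  | fEq u v => fEq u v
  | fBot => fBot
  | fAnd A B => fAnd (extr A) (extr B)
  | fOr A B => fOr (extr A) (extr B)
  | fImp A B => fImp (extr A) (extr B)
  | fEx A => fEx (extr A)
  | fAll A => fNot (fEx (fNot (extr A)))
  end.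

Definition HAex_ax (A : form) : Prop := exists B, HA_ax B /\ A = extr B.

(* Main.v *)
Require Import Defs.
From Stdlib Require Import List.
Import ListNotations.

Lemma weaken T G A : Der T G A -> forall G', incl G G' -> Der T G' A.
Proof.
  induction 1; intros G' Hi.
  - now apply D_ax.
  - apply D_hyp; auto.
  - apply D_botE; auto.
  - apply D_andI; auto.
  - eapply D_andE1; eauto.
  - eapply D_andE2; eauto.
  - apply D_orI1; auto.
  - apply D_orI2; auto.
  - eapply D_orE; [eauto| |].
    + apply IHDer2. intros x [->|Hx]; [left; auto|right; auto].
    + apply IHDer3. intros x [->|Hx]; [left; auto|right; auto].
  - apply D_impI. apply IHDer. intros x [->|Hx]; [left; auto|right; auto].
  - eapply D_impE; eauto.
  - apply D_allI. apply IHDer. intros x Hx.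
    apply in_map_iff in Hx as [y [<- Hy]]. apply in_map; auto.
  - apply D_allE; auto.
  - eapply D_exI; eauto.
  - eapply D_exE. apply IHDer1; auto. apply IHDer2.
    intros x [->|Hx]; [left; auto|right].
    apply in_map_iff in Hx as [y [<- Hy]]. apply in_map; auto.
Qed.

Lemma transfer (T T' : form -> Prop) :
  (forall A, T A -> Der T' [] A) -> forall G A, Der T G A -> Der T' G A.
Proof.
  intros HT G A D; induction D; eauto using Der.
  eapply weaken; [apply HT; auto| intros x []].
Qed.

Lemma tsubst_ext s s' t : (forall n, s n = s' n) -> tsubst s t = tsubst s' t.
Proof. intros H; induction t; simpl; congruence. Qed.

Lemma up_ext s s' : (forall n, s n = s' n) -> forall n, up s n = up s' n.
Proof. intros H [|n]; simpl; auto. unfold tlift; now rewrite H. Qed.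

Lemma fsubst_ext A : forall s s', (forall n, s n = s' n) -> fsubst s A = fsubst s' A.
Proof.
  induction A; intros s s' H; simpl; try f_equal; auto using tsubst_ext, up_ext.
Qed.

Lemma tsubst_comp s s' t :
  tsubst s (tsubst s' t) = tsubst (fun n => tsubst s (s' n)) t.
Proof. induction t; simpl; congruence. Qed.

Lemma up_comp s s' n :
  tsubst (up s) (up s' n) = up (fun m => tsubst s (s' m)) n.
Proof.
  destruct n; simpl; auto. unfold tlift. rewrite !tsubst_comp.
  apply tsubst_ext. intros m; simpl. reflexivity.
Qed.

Lemma fsubst_comp A : forall s s',
  fsubst s (fsubst s' A) = fsubst (fun n => tsubst s (s' n)) A.
Proof.
  induction A; intros s s'; simpl; rewrite ?tsubst_comp; try f_equal; auto;
  rewrite IHA; apply fsubst_ext; apply up_comp.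
Qed.

Lemma tsubst_id t : tsubst tvar t = t.
Proof. induction t; simpl; congruence. Qed.

Lemma fsubst_id A : forall s, (forall n, s n = tvar n) -> fsubst s A = A.
Proof.
  induction A; intros s H; simpl; f_equal; auto;
  try (rewrite (tsubst_ext _ tvar); [apply tsubst_id|auto]);
  apply IHA; intros [|n]; simpl; auto; rewrite H; reflexivity.
Qed.

Lemma inst_up_shift A :
  fsubst (inst (tvar 0)) (fsubst (up (fun n => tvar (S n))) A) = A.
Proof.
  rewrite fsubst_comp. apply fsubst_id. intros [|n]; reflexivity.
Qed.

Lemma extr_fsubst A : forall s, extr (fsubst s A) = fsubst s (extr A).
Proof. induction A; intros s; simpl; rewrite ?IHA, ?IHA1, ?IHA2; auto. Qed.

Lemma conv T G A B : Der T G A -> A = B -> Der T G B.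
Proof. intros H ->; auto. Qed.

Ltac hyp := apply D_hyp; simpl; tauto.

Lemma ind_ok Q :
  let QS := fsubst (fun n => match n with 0 => tsucc (tvar 0) | S k => tvar (S k) end) Q in
  Der HA_ax [] (fImp (fAnd (fsubst (inst tzero) Q) (fNot (fEx (fNot (fImp Q QS)))))
                     (fNot (fEx (fNot Q)))).
Proof.
  intros QS.
  set (Q0 := fsubst (inst tzero) Q).
  set (N := fNot (fEx (fNot (fImp Q QS)))).
  set (P' := fNot (fNot Q)).
  set (sh := fun n => tvar (S n)).
  apply D_impI. apply D_impI.
  apply (D_impE _ _ (fAll P')); [apply D_impI|].
  -
    eapply (D_exE _ _ (fNot Q) fBot); [hyp|].
    eapply D_impE; [|hyp].
    apply (conv _ _ (fsubst (inst (tvar 0)) (fsubst (up sh) P'))).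
    + apply D_allE. apply D_hyp. right; left; reflexivity.
    + apply inst_up_shift.
  - pose proof (D_ax HA_ax [fEx (fNot Q); fAnd Q0 N] _ (ax_ind P')) as Ax.
    eapply D_impE; [exact Ax|]. apply D_andI.
    + apply D_impI. eapply D_impE; [hyp|]. eapply D_andE1; hyp.
    + apply D_allI. simpl map. apply D_impI. apply D_impI.
      apply (D_impE _ _ (fNot Q)); [hyp|]. apply D_impI.
      eapply D_impE.
      * apply (D_andE2 _ _ (fsubst sh Q0) (fsubst sh N)). hyp.
      * apply (D_exI _ _ _ (tvar 0)).
        rewrite inst_up_shift.
        apply D_impI.
        eapply D_impE; [hyp|]. eapply D_impE; hyp.
Qed.

Theorem mainTheorem9 :
  (forall A, HAex_ax A -> provable HA_ax A) /\
  (forall A, provable HAex_ax A -> provable HA_ax A).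
Proof.
  assert (H1 : forall A, HAex_ax A -> provable HA_ax A).
  { intros A [B [HB ->]]. unfold provable.
    destruct HB; try (apply D_ax; constructor).
    unfold induction_ax. simpl extr. rewrite !extr_fsubst. apply ind_ok. }
  split; auto.
  intros A HA. unfold provable in *. eapply transfer; [|exact HA]. exact H1.
Qed.
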